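(* Let $M=(S,\mathrm{Act},P)$ be an MDP, $T\subseteq S$, $\mathrm{rew}\colon S\to\mathbb{R}_{\ge0}$, $\mathrm{opt}\in\{\min,\max\}$, and let $x\in[0,\infty]^S$ be such that (1) $x\le E^{\mathrm{opt}}(x)$ (pointwise) and (2) for all $s\in S$, $\Pr^{\overline{\mathrm{opt}}}_s(\Diamond T)=1$ implies $x(s)<\infty$. Then $x(s)\le\mathbb{E}^{\mathrm{opt}}_s(\Diamond T)$ for all $s\in S$.
   Context: An MDP is a tuple $M=(S,\mathrm{Act},P)$ with $S$ finite, $\mathrm{Act}$ finite, $P\colon S\times\mathrm{Act}\times S\to[0,1]$ with $\sum_{s'}P(s,a,s')\in\{0,1\}$; $\mathrm{Act}(s)=\{a\mid\sum_{s'}P(s,a,s')=1\}$ is nonempty for all $s$; $\mathrm{Post}(s,a)=\{s'\mid P(s,a,s')>0\}$. A strategy is $\sigma\colon S\to\mathrm{Act}$ with $\sigma(s)\in\mathrm{Act}(s)$, inducing a Markov chain with transitions $P(s,\sigma(s),\cdot)$; $\Pr^\sigma_s(\Diamond T)$ is the probability of visiting $T$ from $s$, $\Pr^{\mathrm{opt}}_s(\Diamond T)=\mathrm{opt}_\sigma\Pr^\sigma_s(\Diamond T)$, and $\overline{\min}=\max,\overline{\max}=\min$. For an infinite path $s_0s_1\ldots$, the accumulated reward is $\sum_{k=0}^{n-1}\mathrm{rew}(s_k)$ where $n=\min\{i\mid s_i\in T\}$ if $T$ is visited, and $\infty$ if $T$ is never visited. $\mathbb{E}^\sigma_s(\Diamond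 T)$ is its expectation in the Markov chain induced by $\sigma$ started at $s$, and $\mathbb{E}^{\mathrm{opt}}_s(\Diamond T)=\mathrm{opt}_\sigma\mathbb{E}^\sigma_s(\Diamond T)$. The reward Bellman operator $E^{\mathrm{opt}}\colon[0,\infty]^S\to[0,\infty]^S$ is $E^{\mathrm{opt}}(x)(s)=0$ for $s\in T$ and $\mathrm{rew}(s)+\mathrm{opt}_{a\in\mathrm{Act}(s)}\sum_{s'\in\mathrm{Post}(s,a)}P(s,a,s')x(s')$ for $s\notin T$, with $p\cdot\infty=\infty$ for $p>0$ and $a+\infty=\infty$. *)

(* Defs.v *)
From HB Require Import structures.
From mathcomp Require Import all_boot all_order all_algebra.
From mathcomp Require Import all_classical all_reals all_analysis.
Set Implicit Arguments. Unset Strict Implicit. Unset Printing Implicit Defensive.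
Import Order.TTheory GRing.Theory Num.Theory.
Local Open Scope ring_scope.
Local Open Scope classical_set_scope.

Inductive optT := OMin | OMax.
Definition dual_opt (o : optT) := if o is OMin then OMax else OMin.

Definition opt_set (R : realType) (o : optT) (X : set (\bar R)) : \bar R :=
  if o is OMin then ereal_inf X else ereal_sup X.

Section MDP.
Variables (R : realType) (S A : finType) (P : S -> A -> S -> R).

Definition Act (s : S) : {set A} := [set a | \sum_(s' : S) P s a s' == 1].

Definition is_MDP : Prop :=
  (forall s a s', 0 <= P s a s' <= 1) /\
  (forall s a, \sum_(s' : S) P s a s' = 0 \/ \sum_(s' : S) P s a s' = 1) /\
  (forall s, exists a, a \in Act s).

Definition strategy (sigma : S -> A) : Prop := forall s, sigma s \in Act s.

Variable (T : {set S}).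

Definition first_hit (s : S) (n : nat) (pi : {ffun 'I_n.+1 -> S}) : bool :=
  [&& pi ord0 == s,
      pi ord_max \in T &
      [forall i : 'I_n.+1, (i < n)%N ==> (pi i \notin T)]].

Definition path_prob (sigma : S -> A) (n : nat) (pi : {ffun 'I_n.+1 -> S}) : R :=
  \prod_(i < n) P (pi (widen_ord (leqnSn n) i)) (sigma (pi (widen_ord (leqnSn n) i)))
                  (pi (lift ord0 i)).

Definition hit_prob (sigma : S -> A) (s : S) (n : nat) : R :=
  \sum_(pi : {ffun 'I_n.+1 -> S} | first_hit s pi) path_prob sigma pi.

Definition PrReach (sigma : S -> A) (s : S) : \bar R :=
  (\sum_(0 <= n <oo) (hit_prob sigma s n)%:E)%E.

Definition PrOpt (o : optT) (s : S) : \bar R :=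
  opt_set o [set PrReach sigma s | sigma in strategy].

Variable (rew : S -> R).

Definition path_rew (n : nat) (pi : {ffun 'I_n.+1 -> S}) : R :=
  \sum_(i < n) rew (pi (widen_ord (leqnSn n) i)).

(* E^sigma_s(<> T): expectation of the accumulated reward, which is +oo on the
   event of never visiting T (contributing +oo iff that event has positive
   probability, with 0 * oo = 0) *)
Definition ExpRew (sigma : S -> A) (s : S) : \bar R :=
  (\sum_(0 <= n <oo)
      (\sum_(pi : {ffun 'I_n.+1 -> S} | first_hit s pi) path_prob sigma pi * path_rew pi)%:E
   + (if PrReach sigma s == 1 then 0 else +oo))%E.

Definition ExpOpt (o : optT) (s : S) : \bar R :=
  opt_set o [set ExpRew sigma s | sigma in strategy].

Definition Bellman (o : optT) (x : S -> \bar R) (s : S) : \bar R :=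
  if s \in T then 0%E else
  ((rew s)%:E + opt_set o [set (\sum_(s' | (0 < P s a s')%R) (P s a s')%:E * x s')%E
                            | a in [set a | a \in Act s]])%E.

End MDP.

(* Main.v *)
Require Import Defs.
From mathcomp Require Import all_boot all_order all_algebra.
From mathcomp Require Import all_classical all_reals all_analysis.
From mathcomp Require Import ring lra zify.
Import Order.TTheory GRing.Theory Num.Theory.
Local Open Scope ring_scope.
Set Implicit Arguments. Unset Strict Implicit. Unset Printing Implicit Defensive.

Section Aux.
Variables (R : realType) (S A : finType) (P : S -> A -> S -> R).

Lemma series_le (u : nat -> R) (M : \bar R) : (forall n, 0 <= u n) ->
  (forall n, (\sum_(0 <= i < n) (u i)%:E <= M)%E) ->
  (\sum_(0 <= i <oo) (u i)%:E <= M)%E.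
Proof.
move=> u0 H.
have cv := @is_cvg_nneseries _ (fun i => (u i)%:E) xpredT 0 (fun n _ _ => (u0 n : (0 <= (u n)%:E)%E)).
apply: (lime_le cv); by apply: nearW => k; exact: H.
Qed.

Lemma series_ge (u : nat -> R) n : (forall n, 0 <= u n) ->
  ((\sum_(0 <= i < n) u i)%:E <= \sum_(0 <= i <oo) (u i)%:E)%E.
Proof.
move=> u0; rewrite -sumEFin; apply: nneseries_lim_ge => k _ _; by rewrite lee_fin.
Qed.

Definition consf n (s0 : S) (p : {ffun 'I_n.+1 -> S}) : {ffun 'I_n.+2 -> S} :=
  [ffun i => if unlift ord0 i is Some j then p j else s0].
Definition tailf n (pi : {ffun 'I_n.+2 -> S}) : {ffun 'I_n.+1 -> S} :=
  [ffun j => pi (lift ord0 j)].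

Lemma consf0 n s0 (p : {ffun 'I_n.+1 -> S}) : consf s0 p ord0 = s0.
Proof. by rewrite ffunE unlift_none. Qed.

Lemma consfS n s0 (p : {ffun 'I_n.+1 -> S}) j : consf s0 p (lift ord0 j) = p j.
Proof. by rewrite ffunE liftK. Qed.

Lemma consf_eta n (pi : {ffun 'I_n.+2 -> S}) : consf (pi ord0) (tailf pi) = pi.
Proof.
apply/ffunP => i; case: (unliftP ord0 i) => [j ->|->].
  by rewrite consfS ffunE.
by rewrite consf0.
Qed.

Lemma fh_cons (T : {set S}) n s0 (p : {ffun 'I_n.+1 -> S}) s :
  first_hit T s (consf s0 p) = [&& s0 == s, s0 \notin T & first_hit T (p ord0) p].
Proof.
rewrite /first_hit consf0 eqxx /=.
have -> : (ord_max : 'I_n.+2) = lift ord0 ord_max by apply/val_inj.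
rewrite consfS.
have -> : [forall i : 'I_n.+2, (i < n.+1)%N ==> (consf s0 p i \notin T)] =
   (s0 \notin T) && [forall j : 'I_n.+1, (j < n)%N ==> (p j \notin T)].
  apply/idP/idP.
    move/forallP=> H; apply/andP; split; first by have := H ord0; rewrite consf0.
    by apply/forallP=> j; have := H (lift ord0 j); rewrite consfS.
  case/andP=> H0 /forallP H; apply/forallP=> i.
  case: (unliftP ord0 i) => [j ->|->]; first by rewrite consfS; exact: H.
  by rewrite consf0 H0 implybT.
by case: (s0 == s); case: (s0 \in T); case: (p ord_max \in T).
Qed.

Lemma fh_sum (T : {set S}) n s (F : {ffun 'I_n.+2 -> S} -> R) :
  \sum_(pi | first_hit T s pi) F pi =
  if s \in T then 0 else
    \sum_(s' : S) \sum_(p : {ffun 'I_n.+1 -> S} | first_hit T s' p) F (consf s p).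
Proof.
rewrite (reindex (fun q : S * {ffun 'I_n.+1 -> S} => consf q.1 q.2)) /=; last first.
  exists (fun pi : {ffun 'I_n.+2 -> S} => (pi ord0, tailf pi)) => [[s0 p] _ | pi _] /=; last exact: consf_eta.
  congr pair; first exact: consf0.
  by apply/ffunP => j; rewrite ffunE consfS.
rewrite -(pair_big_dep xpredT (fun s0 p => first_hit T s (consf s0 p))
   (fun s0 p => F (consf s0 p))) /=.
rewrite (bigD1 s) //= [X in _ + X]big1 ?addr0; last first.
  move=> s0 /negbTE ns0; apply: big_pred0 => p; by rewrite fh_cons ns0.
case: ifP => sT.
  by apply: big_pred0 => p; rewrite fh_cons eqxx sT.
under eq_bigl do rewrite fh_cons eqxx sT /=.
under [RHS]eq_bigr do rewrite big_mkcond.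
rewrite exchange_big big_mkcond /=; apply: eq_bigr => p _.
rewrite (bigD1 (p ord0)) //= big1 ?addr0 //.
move=> s' ns'; case: ifP => // /andP[/eqP e _]; by rewrite e eqxx in ns'.
Qed.


Lemma pp_cons (sg : S -> A) n s0 (p : {ffun 'I_n.+1 -> S}) :
  path_prob P sg (consf s0 p) = P s0 (sg s0) (p ord0) * path_prob P sg p.
Proof.
rewrite /path_prob big_ord_recl.
have -> : widen_ord (leqnSn n.+1) ord0 = ord0 by apply/val_inj.
rewrite consf0 consfS; congr (_ * _); apply: eq_bigr => i _.
have -> : widen_ord (leqnSn n.+1) (lift ord0 i) = lift ord0 (widen_ord (leqnSn n) i)
  by apply/val_inj.
by rewrite !consfS.
Qed.

Lemma pr_cons (rew : S -> R) n s0 (p : {ffun 'I_n.+1 -> S}) :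
  path_rew rew (consf s0 p) = rew s0 + path_rew rew p.
Proof.
rewrite /path_rew big_ord_recl.
have -> : widen_ord (leqnSn n.+1) ord0 = ord0 by apply/val_inj.
rewrite consf0; congr (_ + _); apply: eq_bigr => i _.
have -> : widen_ord (leqnSn n.+1) (lift ord0 i) = lift ord0 (widen_ord (leqnSn n) i)
  by apply/val_inj.
by rewrite !consfS.
Qed.

Variable (T : {set S}).

Lemma fh_head n s (p : {ffun 'I_n.+1 -> S}) : first_hit T s p -> p ord0 = s.
Proof. by case/and3P => /eqP. Qed.

Lemma hit0 sg s : hit_prob P T sg s 0 = (s \in T)%:R.
Proof.
rewrite /hit_prob.
have Hp : forall pi : {ffun 'I_1 -> S}, first_hit T s pi = (s \in T) && (pi == [ffun => s]).
  move=> pi; rewrite /first_hit.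
  have -> : (ord_max : 'I_1) = ord0 by apply/val_inj.
  have -> : [forall i : 'I_1, (i < 0)%N ==> (pi i \notin T)] by apply/forallP.
  rewrite andbT.
  have -> : (pi == [ffun => s]) = (pi ord0 == s).
    apply/eqP/eqP => [->|e]; first by rewrite ffunE.
    by apply/ffunP => i; rewrite ord1 ffunE.
  by case: eqP => [->|]; rewrite ?andbF // andbC.
under eq_bigl do rewrite Hp.
case: (s \in T) => /=; last by rewrite big_pred0.
by rewrite (big_pred1 [ffun => s]) // /path_prob big_ord0.
Qed.

Lemma hitS sg s n : hit_prob P T sg s n.+1 =
  if s \in T then 0 else \sum_(s' : S) P s (sg s) s' * hit_prob P T sg s' n.
Proof.
rewrite /hit_prob fh_sum; case: ifP => // _; apply: eq_bigr => s' _.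
rewrite mulr_sumr; apply: eq_bigr => p fh.
by rewrite pp_cons (fh_head fh).
Qed.

Definition Gk (rew : S -> R) sg s n :=
  \sum_(pi : {ffun 'I_n.+1 -> S} | first_hit T s pi) path_prob P sg pi * path_rew rew pi.

Lemma G0 rew sg s : Gk rew sg s 0 = 0.
Proof. by apply: big1 => pi _; rewrite /path_rew big_ord0 mulr0. Qed.

Lemma GS rew sg s n : Gk rew sg s n.+1 =
  if s \in T then 0 else
  \sum_(s' : S) P s (sg s) s' * (rew s * hit_prob P T sg s' n + Gk rew sg s' n).
Proof.
rewrite /Gk fh_sum; case: ifP => // _; apply: eq_bigr => s' _.
rewrite /hit_prob mulrDr !mulr_sumr -big_split /=.
apply: eq_bigr => p fh.
rewrite pp_cons pr_cons (fh_head fh); ring.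
Qed.

End Aux.

Section UU.
Variables (R : realType) (S A : finType) (P : S -> A -> S -> R).
Hypothesis P0 : forall s a s', 0 <= P s a s'.

Fixpoint Un (T : {set S}) (sg : S -> A) (n : nat) (u : S) : R :=
  match n with
  | 0 => 1
  | n'.+1 => if u \in T then 0 else \sum_(u' : S) P u (sg u) u' * Un T sg n' u'
  end.

Lemma UnS T sg n u : Un T sg n.+1 u =
  if u \in T then 0 else \sum_(u' : S) P u (sg u) u' * Un T sg n u'.
Proof. by []. Qed.

Definition stoch (sg : S -> A) := forall u, \sum_(u' : S) P u (sg u) u' = 1.

Lemma Un_ge0 T sg n u : 0 <= Un T sg n u.
Proof.
elim: n u => [|n IH] u /=; first exact: ler01.
case: ifP => _ //; apply: sumr_ge0 => u' _; exact: mulr_ge0.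
Qed.

Lemma Un_le1 T sg (sP : stoch sg) n u : Un T sg n u <= 1.
Proof.
elim: n u => [|n IH] u /=; first exact: lexx.
case: ifP => _ //; rewrite -(sP u); apply: ler_sum => u' _.
by rewrite -[leRHS]mulr1; apply: ler_wpM2l.
Qed.

Lemma Un_decS T sg (sP : stoch sg) n u : Un T sg n.+1 u <= Un T sg n u.
Proof.
elim: n u => [|n IH] u; first exact: Un_le1.
rewrite (UnS _ _ n.+1) (UnS _ _ n); case: ifP => _ //.
apply: ler_sum => u' _; by apply: ler_wpM2l.
Qed.

Lemma Un_dec T sg (sP : stoch sg) m n u : (m <= n)%N -> Un T sg n u <= Un T sg m u.
Proof.
move=> /subnK <-; elim: (n - m)%N => [|k IH]; first by rewrite add0n.
by rewrite addSn; exact: (le_trans (Un_decS _ sP _ _) IH).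
Qed.

Definition reach1 T sg u := forall e : R, 0 < e -> exists n, Un T sg n u < e.

Lemma reach1_succ T sg (sP : stoch sg) u u' : reach1 T sg u -> u \notin T ->
  0 < P u (sg u) u' -> reach1 T sg u'.
Proof.
move=> H uT pp e e0.
have [n Hn] := H (e * P u (sg u) u') (mulr_gt0 e0 pp).
exists n.
have h1 : P u (sg u) u' * Un T sg n u' <= Un T sg n.+1 u.
  rewrite /= (negbTE uT) (bigD1 u') //= -[leLHS]addr0 lerD2l.
  apply: sumr_ge0 => v _; exact: mulr_ge0 (Un_ge0 _ _ _ _).
have h2 := le_lt_trans (le_trans h1 (Un_decS _ sP _ _)) Hn.
by rewrite mulrC ltr_pM2r in h2.
Qed.

Lemma Un_sub (T T' : {set S}) sg (sP : stoch sg) n u : T \subset T' -> Un T' sg n u <= Un T sg n u.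
Proof.
move=> sub; elim: n u => [|n IH] u //=.
case: ifP => uT'; first by case: ifP => _ //; apply: sumr_ge0 => v _; exact: mulr_ge0 (Un_ge0 _ _ _ _).
have -> : (u \in T) = false by apply/negbTE/negP => /(fintype.subsetP sub); rewrite uT'.
apply: ler_sum => v _; exact: ler_wpM2l.
Qed.

Lemma Un_mult (T : {set S}) sg (G : pred S) (c : R) m :
  (forall u u', G u -> u \notin T -> 0 < P u (sg u) u' -> G u') ->
  (forall u, G u -> Un T sg m u <= c) ->
  forall n u, G u -> Un T sg (n + m) u <= c * Un T sg n u.
Proof.
move=> clo Hc; elim=> [|n IH] u Gu; first by rewrite add0n mulr1; exact: Hc.
rewrite addSn /=; case: ifP => uT; first by rewrite mulr0.
rewrite mulr_sumr; apply: ler_sum => v _; rewrite mulrCA.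
have := P0 u (sg u) v; rewrite le0r => /orP[/eqP ->|pp]; first by rewrite !mul0r.
apply: ler_wpM2l; [exact: ltW | exact: IH (clo u v Gu (negbT uT) pp)].
Qed.


Lemma Fclos_ineq (T : {set S}) s tau tau2 (sP : stoch tau) :
  (forall u, u != s -> tau2 u = tau u) ->
  forall m n u, Un T tau (n + m) u <= Un (T :|: [set s]) tau2 n u + Un T tau m s.
Proof.
move=> eq m; elim=> [|n IH] u.
  rewrite add0n /=; apply: le_trans (Un_le1 _ sP _ _) _.
  by rewrite lerDl; exact: Un_ge0.
rewrite addSn; case: (boolP (u \in T :|: [set s])) => uT'.
  rewrite (UnS _ _ n) uT' add0r.
  move: uT'; rewrite finset.in_setU finset.in_set1 => /orP[uT|/eqP->].
    by rewrite UnS uT; exact: Un_ge0.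
  apply: (Un_dec _ sP); lia.
have uT : u \notin T by move: uT'; rewrite finset.in_setU negb_or => /andP[].
have us : u != s by move: uT'; rewrite finset.in_setU finset.in_set1 negb_or => /andP[].
rewrite UnS (UnS _ _ n) (negbTE uT) (negbTE uT') (eq u us).
rewrite -[X in _ <= _ + X]mul1r -(sP u) mulr_suml -big_split /=.
apply: ler_sum => v _; rewrite -mulrDr; exact: ler_wpM2l.
Qed.

Lemma Fclos (T : {set S}) s tau tau2 (sP : stoch tau) (sP2 : stoch tau2) u :
  (forall u, u != s -> tau2 u = tau u) ->
  reach1 T tau s -> reach1 T tau2 u -> reach1 T tau u.
Proof.
move=> eq Hs Hu e e0.
have e2 : 0 < e / 2 by rewrite divr_gt0.
have [n Hn] := Hu _ e2; have [m Hm] := Hs _ e2.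
exists (n + m)%N; apply: le_lt_trans (@Fclos_ineq T s tau tau2 sP eq m n u) _.
have := @Un_sub T (T :|: [set s]) tau2 sP2 n u (finset.subsetUl T [set s]).
lra.
Qed.

Lemma exN (T : {set S}) sg (sP : stoch sg) (G : pred S) (c : R) : 0 < c ->
  (forall u, G u -> reach1 T sg u) -> exists N, forall u, G u -> Un T sg N u <= c.
Proof.
move=> c0 H.
suff [N HN] : exists N, forall u, u \in enum S -> G u -> Un T sg N u <= c.
  by exists N => u; apply: HN; rewrite mem_enum.
elim: (enum S) => [|a l [N IH]]; first by exists 0%N.
case: (boolP (G a)) => Ga; last first.
  exists N => u; rewrite inE => /orP[/eqP->|ul]; [by rewrite (negbTE Ga)| exact: IH].
have [n Hn] := H a Ga c c0.
exists (maxn N n) => u; rewrite inE => /orP[/eqP-> _|ul Gu].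
  apply: le_trans (ltW Hn); apply: Un_dec => //; exact: leq_maxr.
apply: le_trans (IH u ul Gu); apply: Un_dec => //; exact: leq_maxl.
Qed.

Lemma geo (T : {set S}) sg (G : pred S) N (c : R) : 0 <= c ->
  (forall u u', G u -> u \notin T -> 0 < P u (sg u) u' -> G u') ->
  (forall u, G u -> Un T sg N u <= c) ->
  forall k u, G u -> Un T sg (k * N) u <= c ^+ k.
Proof.
move=> c0 clo HN; elim=> [|k IH] u Gu; first by rewrite mul0n expr0.
rewrite mulSn addnC exprS.
apply: le_trans (Un_mult clo HN _ Gu) _.
exact: ler_wpM2l (IH u Gu).
Qed.

End UU.

Section Hit.
Variables (R : realType) (S A : finType) (P : S -> A -> S -> R) (T : {set S}).
Hypothesis P0 : forall s a s', 0 <= P s a s'.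

Definition Qn sg n s := \sum_(0 <= k < n) hit_prob P T sg s k.

Lemma QnS sg n s : Qn sg n.+1 s =
  (s \in T)%:R + if s \in T then 0 else \sum_(s' : S) P s (sg s) s' * Qn sg n s'.
Proof.
rewrite /Qn big_nat_recl // hit0; congr (_ + _).
under eq_bigr do rewrite hitS.
case: ifP => _; first by rewrite big1.
rewrite exchange_big /=; apply: eq_bigr => s' _; by rewrite mulr_sumr.
Qed.

Lemma U_Q sg (sP : stoch P sg) n s : Un P T sg n s = 1 - Qn sg n s.
Proof.
elim: n s => [|n IH] s; first by rewrite /Qn big_geq // subr0.
rewrite UnS QnS; case: ifP => _; first by rewrite addr0 subrr.
rewrite add0r; under eq_bigr do rewrite IH mulrBr mulr1.
by rewrite sumrB sP.
Qed.

Lemma path_prob_ge0 sg n (pi : {ffun 'I_n.+1 -> S}) : 0 <= path_prob P sg pi.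
Proof. by apply: prodr_ge0 => i _. Qed.

Lemma hit_ge0 sg s n : 0 <= hit_prob P T sg s n.
Proof. by apply: sumr_ge0 => pi _; exact: path_prob_ge0. Qed.

Lemma Qn_le1 sg (sP : stoch P sg) n s : Qn sg n s <= 1.
Proof. have := Un_ge0 P0 T sg n s; rewrite U_Q //; lra. Qed.

Lemma psum_Qn sg n s :
  (\sum_(0 <= i < n) (hit_prob P T sg s i)%:E)%E = (Qn sg n s)%:E.
Proof. by rewrite sumEFin. Qed.

Lemma PrReach_le1 sg (sP : stoch P sg) s : (PrReach P T sg s <= 1)%E.
Proof.
apply: series_le; first by move=> n; exact: hit_ge0.
by move=> n; rewrite psum_Qn lee_fin Qn_le1.
Qed.

Lemma PrReach1P sg (sP : stoch P sg) s :
  PrReach P T sg s = 1%E <-> reach1 P T sg s.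
Proof.
split.
  move=> H e e0; apply: contrapT => hn.
  have h : forall n, 1 - e >= Qn sg n s.
    move=> n; have hu := U_Q sP n s; rewrite leNgt; apply/negP => h'.
    by apply: hn; exists n; lra.
  have : (PrReach P T sg s <= (1 - e)%:E)%E.
    apply: series_le; first by move=> n; exact: hit_ge0.
    by move=> n; rewrite psum_Qn lee_fin.
  rewrite H lee_fin => h1; clear H; lra.
move=> H; apply/eqP; rewrite eq_le PrReach_le1 //=.
apply/lee_addgt0Pr => e e0.
have [n Hn] := H e e0; rewrite U_Q // in Hn.
apply: le_trans (leeD2r _ (series_ge n (hit_ge0 sg s))).
rewrite -EFinD lee_fin -/(Qn sg n s); lra.
Qed.

Variable rew : S -> R.
Hypothesis rew0 : forall s, 0 <= rew s.

Definition ERn sg n s := \sum_(0 <= k < n) Gk P T rew sg s k.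

Lemma Gk_ge0 sg s n : 0 <= Gk P T rew sg s n.
Proof.
apply: sumr_ge0 => pi _; apply: mulr_ge0; first exact: path_prob_ge0.
by apply: sumr_ge0 => i _.
Qed.

Lemma ERnS sg n s : ERn sg n.+1 s =
  if s \in T then 0 else \sum_(s' : S) P s (sg s) s' * (rew s * Qn sg n s' + ERn sg n s').
Proof.
rewrite /ERn big_nat_recl // G0 add0r.
under eq_bigr do rewrite GS.
case: ifP => _; first by rewrite big1.
rewrite exchange_big /=; apply: eq_bigr => s' _.
rewrite -mulr_sumr; congr (_ * _).
by rewrite /Qn /ERn big_split /= -mulr_sumr.
Qed.

End Hit.

Section Arith.
Variable R : realType.

Lemma quarter k : (k.+1%:R) ^+ 2 * ((1/4 : R) ^+ k) <= 1.
Proof.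
elim: k => [|k IH]; first by rewrite expr0 mulr1 expr1n.
rewrite [X in _ * X]exprS.
have w0 : 0 <= (1/4 : R) ^+ k by apply: exprn_ge0; lra.
have hk : 0 <= k%:R :> R by [].
have e1 : k.+2%:R = k%:R + 2 :> R by rewrite -addn2 natrD.
have e2 : k.+1%:R = k%:R + 1 :> R by rewrite -addn1 natrD.
rewrite e1; rewrite e2 in IH.
apply: le_trans IH; rewrite mulrA; apply: ler_wpM2r => //.
rewrite !expr2; nra.
Qed.

Lemma arith (D e : R) : 0 <= D -> 0 < e ->
  exists k : nat, D * (k.+1%:R * (1/4) ^+ k) <= e.
Proof.
move=> D0 e0.
have De0 : 0 <= D / e by rewrite divr_ge0 // ltW.
have hb := archi_boundP De0.
set k := Num.Def.archi_bound (D / e) in hb.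
exists k.
have w0 : 0 <= (1/4 : R) ^+ k by apply: exprn_ge0; lra.
have hq := quarter k.
have hK : k%:R <= k.+1%:R :> R by rewrite ler_nat.
have hK0 : 0 < k.+1%:R :> R by rewrite ltr0n.
have hD : D < e * k.+1%:R.
  rewrite ltr_pdivrMr // in hb; rewrite mulrC; apply: lt_le_trans hb _.
  by rewrite ler_wpM2r // ltW.
rewrite expr2 in hq.
nra.
Qed.

End Arith.

Section Core.
Variables (R : realType) (S A : finType) (P : S -> A -> S -> R) (T : {set S}).
Variable rew : S -> R.
Hypothesis P0 : forall s a s', 0 <= P s a s'.
Hypothesis rew0 : forall s, 0 <= rew s.

Lemma core_inv sg (sP : stoch P sg) (G : pred S) (y : S -> R) (B Rm : R) :
  (forall u u', G u -> u \notin T -> 0 < P u (sg u) u' -> G u') ->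
  (forall u, G u -> y u <= B) -> (forall u, rew u <= Rm) ->
  (forall u, G u -> u \in T -> y u <= 0) ->
  (forall u, G u -> u \notin T -> y u <= rew u + \sum_(u' : S) P u (sg u) u' * y u') ->
  forall n u, G u -> y u <= ERn P T rew sg n u + (B + n%:R * Rm) * Un P T sg n u.
Proof.
move=> clo HB HR HT Hy; elim=> [|n IH] u Gu.
  rewrite /ERn big_geq // add0r /= mul0r addr0 mulr1; exact: HB.
rewrite ERnS UnS; case: ifP => uT.
  rewrite mulr0 addr0; exact: HT.
have uT' : u \notin T by rewrite uT.
apply: le_trans (Hy u Gu uT') _.
set C := B + n%:R * Rm.
set a := \sum_(v : S) P u (sg u) v * Un P T sg n v.
have step : \sum_(v : S) P u (sg u) v * y v <=
    \sum_(v : S) P u (sg u) v * (ERn P T rew sg n v + C * Un P T sg n v).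
  apply: ler_sum => v _.
  have := P0 u (sg u) v; rewrite le0r => /orP[/eqP ->|pp]; first by rewrite !mul0r.
  apply: ler_wpM2l; [exact: ltW | exact: IH v (clo u v Gu uT' pp)].
have e1 : \sum_(v : S) P u (sg u) v * (ERn P T rew sg n v + C * Un P T sg n v) =
    \sum_(v : S) P u (sg u) v * ERn P T rew sg n v + C * a.
  rewrite /a mulr_sumr -big_split /=; apply: eq_bigr => v _; ring.
have hq : forall v, Qn P T sg n v = 1 - Un P T sg n v.
  by move=> v; rewrite (U_Q T sP); ring.
have e2 : \sum_(v : S) P u (sg u) v * (rew u * Qn P T sg n v + ERn P T rew sg n v) =
    rew u - rew u * a + \sum_(v : S) P u (sg u) v * ERn P T rew sg n v.
  transitivity (\sum_(v : S) (rew u * P u (sg u) v - rew u * (P u (sg u) v * Un P T sg n v)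
       + P u (sg u) v * ERn P T rew sg n v)).
    by apply: eq_bigr => v _; rewrite hq; ring.
  by rewrite big_split sumrB /= -!mulr_sumr sP mulr1.
rewrite e2; rewrite e1 in step.
have ha : 0 <= a by apply: sumr_ge0 => v _; apply: mulr_ge0 => //; exact: Un_ge0.
have hr : rew u * a <= Rm * a by apply: ler_wpM2r.
have -> : B + n.+1%:R * Rm = C + Rm by rewrite /C -addn1 natrD; ring.
lra.
Qed.

Lemma core_eps sg (sP : stoch P sg) (G : pred S) (y : S -> R) (B Rm : R) :
  (forall u u', G u -> u \notin T -> 0 < P u (sg u) u' -> G u') ->
  (forall u, G u -> reach1 P T sg u) -> 0 <= B -> 0 <= Rm ->
  (forall u, G u -> y u <= B) -> (forall u, rew u <= Rm) ->
  (forall u, G u -> u \in T -> y u <= 0) ->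
  (forall u, G u -> u \notin T -> y u <= rew u + \sum_(u' : S) P u (sg u) u' * y u') ->
  forall u, G u -> forall e, 0 < e -> exists n, y u <= ERn P T rew sg n u + e.
Proof.
move=> clo Hr B0 Rm0 HB HR HT Hy u Gu e e0.
have c0 : (0 : R) < 1/4 by lra.
have [N HN] := exN P0 sP c0 Hr.
have geoN := geo P0 (ltW c0) clo HN.
set D := B + N%:R * Rm.
have D0 : 0 <= D by rewrite /D; apply: addr_ge0 => //; apply: mulr_ge0.
have [k Hk] := arith D0 e0.
exists (k * N)%N.
apply: le_trans (core_inv sP clo HB HR HT Hy (k * N) Gu) _.
rewrite lerD2l.
have hU := geoN k u Gu.
have hU0 := Un_ge0 P0 T sg (k * N) u.
set w := (1/4 : R) ^+ k in hU Hk.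
have w0 : 0 <= w by apply: exprn_ge0; lra.
apply: le_trans Hk.
have eK : (k * N)%:R = k%:R * N%:R :> R by rewrite natrM.
have eK1 : k.+1%:R = k%:R + 1 :> R by rewrite -addn1 natrD.
rewrite eK eK1 /D.
have hk : 0 <= k%:R :> R by [].
have hN : 0 <= N%:R :> R by [].
set K := k%:R in eK eK1 hk *.
set NN := N%:R in eK hN *.
have hNR : 0 <= NN * Rm by apply: mulr_ge0.
have h1 : (B + K * NN * Rm) * Un P T sg (k * N) u <= (B + K * NN * Rm) * w.
  apply: ler_wpM2l => //; apply: addr_ge0 => //; rewrite -mulrA; exact: mulr_ge0.
apply: le_trans h1 _.
rewrite mulrA; apply: ler_wpM2r => //.
have hBK : 0 <= B * K by apply: mulr_ge0.
nra.
Qed.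

End Core.

Section Main.
Variables (R : realType) (S A : finType) (P : S -> A -> S -> R) (T : {set S}).
Variable rew : S -> R.
Hypothesis P0 : forall s a s', 0 <= P s a s'.
Hypothesis rew0 : forall s, 0 <= rew s.

Lemma ExpRew_inf sg s : PrReach P T sg s != 1%E -> ExpRew P T rew sg s = +oo%E.
Proof.
move=> H; rewrite /ExpRew (negbTE H); apply: addey.
have h : (0 <= \sum_(0 <= n <oo)
      (\sum_(pi : {ffun 'I_n.+1 -> S} | first_hit T s pi) path_prob P sg pi * path_rew rew pi)%:E)%E.
  apply: nneseries_ge0 => n _ _; rewrite lee_fin; exact: Gk_ge0.
by rewrite gt_eqF //; apply: lt_le_trans h; exact: ltNy0.
Qed.

Lemma sum_conv u a (x : S -> \bar R) :
  (forall u', 0 < P u a u' -> x u' \is a fin_num) ->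
  (\sum_(u' | (0 < P u a u')%R) (P u a u')%:E * x u')%E =
  (\sum_(u' : S) P u a u' * fine (x u'))%:E.
Proof.
move=> H; rewrite -sumEFin [in RHS](bigID (fun u' => (0 < P u a u')%R)) /=.
rewrite [X in (_ + X)%E]big1 ?adde0; last first.
  move=> v /negbTE pv.
  have -> : P u a v = 0 by apply/eqP; rewrite eq_le P0 andbT leNgt pv.
  by rewrite mul0r.
by apply: eq_bigr => v pv; rewrite EFinM fineK //; exact: H.
Qed.

Lemma core_E sg (sP : stoch P sg) (G : pred S) (x : S -> \bar R) :
  (forall u u', G u -> u \notin T -> 0 < P u (sg u) u' -> G u') ->
  (forall u, G u -> reach1 P T sg u) ->
  (forall u, (0 <= x u)%E) ->
  (forall u, G u -> (x u < +oo)%E) ->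
  (forall u, G u -> u \in T -> (x u <= 0)%E) ->
  (forall u, G u -> u \notin T -> (x u <= (rew u)%:E +
      \sum_(u' | (0 < P u (sg u) u')%R) (P u (sg u) u')%:E * x u')%E) ->
  forall u, G u -> (x u <= ExpRew P T rew sg u)%E.
Proof.
move=> clo Hr x0 xfin HT Hy u Gu.
have fin : forall v, G v -> x v \is a fin_num by move=> v Gv; rewrite ge0_fin_numE // xfin.
set y := fun v => fine (x v).
set B := \sum_(v : S) y v.
set Rm := \sum_(v : S) rew v.
have y0 : forall v, 0 <= y v by move=> v; exact: fine_ge0.
have B0 : 0 <= B by apply: sumr_ge0.
have Rm0 : 0 <= Rm by apply: sumr_ge0.
have HB : forall v, G v -> y v <= B.
  by move=> v _; rewrite /B (bigD1 v) //= lerDl; apply: sumr_ge0.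
have HR : forall v, rew v <= Rm.
  by move=> v; rewrite /Rm (bigD1 v) //= lerDl; apply: sumr_ge0.
have HTy : forall v, G v -> v \in T -> y v <= 0.
  by move=> v Gv vT; rewrite -lee_fin /y fineK ?fin //; exact: HT.
have Hyy : forall v, G v -> v \notin T ->
    y v <= rew v + \sum_(u' : S) P v (sg v) u' * y u'.
  move=> v Gv vT; rewrite -lee_fin /y fineK ?fin // EFinD.
  rewrite -(sum_conv (x := x)); first exact: Hy.
  by move=> w pw; apply: fin; exact: clo pw.
have Hu := core_eps P0 sP clo Hr B0 Rm0 HB HR HTy Hyy Gu.
have HP : PrReach P T sg u = 1%E by apply/(PrReach1P T P0 sP); exact: Hr.
rewrite /ExpRew HP eqxx adde0 -(fineK (fin u Gu)).
apply/lee_addgt0Pr => e e0.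
have [n Hn] := Hu e e0.
apply: le_trans (leeD2r _ (series_ge n (Gk_ge0 T P0 rew0 sg u))).
by rewrite -EFinD lee_fin.
Qed.

End Main.

Unset Implicit Arguments.

Theorem lemma6 (R : realType) (S A : finType) (P : S -> A -> S -> R)
  (T : {set S}) (rew : S -> R) (o : optT) (x : S -> \bar R) :
  is_MDP P ->
  (forall s, 0 <= rew s) ->
  (forall s, (0 <= x s)%E) ->
  (forall s, (x s <= Bellman P T rew o x s)%E) ->
  (forall s, PrOpt P T (dual_opt o) s = 1%E -> (x s < +oo)%E) ->
  forall s, (x s <= ExpOpt P T rew o s)%E.
Proof.
move=> [Pb [_ Hact]] rew0 x0 Hx Hfin s.
have P0 : forall s a s', 0 <= P s a s' by move=> s1 a s'; case/andP: (Pb s1 a s').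
have stP : forall sg, strategy P sg -> stoch P sg.
  by move=> sg Hs u; move: (Hs u); rewrite inE => /eqP.
have [a0 _] := Hact s.
pose sg0 := fun u => odflt a0 [pick a in Act P u].
have ssg0 : strategy P sg0.
  move=> u; rewrite /sg0; case: pickP => [a //|H].
  by have [a Ha] := Hact u; rewrite H in Ha.
have BT : forall u, u \in T -> (x u <= 0)%E.
  by move=> u uT; have := Hx u; rewrite /Bellman uT.
pose f u a := (\sum_(u' | (0 < P u a u')%R) (P u a u')%:E * x u')%E.
have BnT : forall u, u \notin T -> (x u <= (rew u)%:E +
     opt_set o [set f u a | a in [set a | a \in Act P u]])%E.
  by move=> u uT; have := Hx u; rewrite /Bellman (negbTE uT).
case: o Hx Hfin BnT => Hx Hfin BnT.
-
  rewrite /ExpOpt /opt_set; apply: le_ereal_inf_tmp => _ [sg ssg <-].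
  have sP := stP sg ssg.
  case: (eqVneq (PrReach P T sg s) 1%E) => Hs; last by rewrite ExpRew_inf // leey.
  apply: (core_E P0 rew0 sP (G := fun u => PrReach P T sg u == 1%E)) => //; last by apply/eqP.
  + move=> u u' /eqP Gu uT pp; apply/eqP/(PrReach1P T P0 sP).
    by apply: (reach1_succ P0 sP _ uT pp); apply/(PrReach1P T P0 sP).
  + by move=> u /eqP Gu; apply/(PrReach1P T P0 sP).
  + move=> u /eqP Gu; apply: Hfin; rewrite /PrOpt /=.
    apply/eqP; rewrite eq_le; apply/andP; split.
      apply: ge_ereal_sup => _ [tau stau <-]; exact: (PrReach_le1 T P0 (stP _ stau)).
    by apply: le_ereal_sup_tmp; exists (PrReach P T sg u); [exists sg | rewrite Gu].
  + by move=> u _; exact: BT.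
  + move=> u _ uT; apply: le_trans (BnT u uT) _; apply: leeD2l.
    by apply: ereal_inf_lbound; exists (sg u) => //; exact: ssg.
-
  rewrite /ExpOpt /opt_set /=.
  pose F u := forall tau, strategy P tau -> PrReach P T tau u = 1%E.
  case: (pselect (F s)) => Fs; last first.
    move/existsNP: Fs => [tau /not_implyP [stau Htau]].
    apply: le_ereal_sup_tmp; exists (ExpRew P T rew tau s); first by exists tau.
    by rewrite ExpRew_inf ?leey //; apply/eqP.
  pose sg := fun u => [arg max_(a > sg0 u in Act P u) f u a]%O.
  have ssg : strategy P sg.
    by move=> u; rewrite /sg; case: arg_maxP => //; exact: ssg0.
  have sgmax : forall u a, a \in Act P u -> (f u a <= f u (sg u))%E.
    move=> u a Ha; rewrite /sg; case: arg_maxP => [|i _ Hi]; first exact: ssg0.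
    exact: Hi.
  have sP := stP sg ssg.
  apply: le_ereal_sup_tmp; exists (ExpRew P T rew sg s); first by exists sg.
  apply: (core_E P0 rew0 sP (G := fun u => `[< F u >])) => //; last by apply/asboolP.
  + move=> u u' /asboolP Fu uT pp; apply/asboolP => tau stau.
    pose tau2 := fun v => if v == u then sg u else tau v.
    have stau2 : strategy P tau2.
      by move=> v; rewrite /tau2; case: eqP => [->|_]; [exact: ssg | exact: stau].
    have r2u : reach1 P T tau2 u by apply/(PrReach1P T P0 (stP _ stau2)); exact: Fu.
    have pp2 : (0 < P u (tau2 u) u')%R by rewrite /tau2 eqxx.
    have r2u' := reach1_succ P0 (stP _ stau2) r2u uT pp2.
    have rtu : reach1 P T tau u by apply/(PrReach1P T P0 (stP _ stau)); exact: Fu.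
    have eq2 : forall v, v != u -> tau2 v = tau v by move=> v /negbTE nv; rewrite /tau2 nv.
    apply/(PrReach1P T P0 (stP _ stau)).
    exact: (Fclos P0 (stP _ stau) (stP _ stau2) eq2 rtu r2u').
  + by move=> u /asboolP Fu; apply/(PrReach1P T P0 sP); exact: Fu.
  + move=> u /asboolP Fu; apply: Hfin; rewrite /PrOpt /=.
    apply/eqP; rewrite eq_le; apply/andP; split.
      apply: (le_trans (y := PrReach P T sg0 u)); last by rewrite Fu.
      by apply: ereal_inf_lbound; exists sg0.
    by apply: le_ereal_inf_tmp => _ [tau stau <-]; rewrite Fu.
  + by move=> u _; exact: BT.
  + move=> u _ uT; apply: le_trans (BnT u uT) _; apply: leeD2l.
    by apply: ge_ereal_sup => _ [a Ha <-]; exact: sgmax.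
Qed.
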